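(* For every $t>0$ and all finite sets $X,Y,Z\subset\mathbb{R}$, $d^t_{Mag}(X,Y)+d^t_{Mag}(Y,Z)\ge d^t_{Mag}(X,Z)$.
   Context: For a finite set $A\subset\mathbb{R}$ and $t>0$, the matrix $\zeta_{tA}(x,y)=\exp(-t|x-y|)$ ($x,y\in A$) is invertible and $\mathrm{Mag}(tA)=\mathbb{1}^\top\zeta_{tA}^{-1}\mathbb{1}$, with $\mathrm{Mag}(t\emptyset)=0$. The magnitude distance is $d^t_{Mag}(X,Y)=2\,\mathrm{Mag}(t(X\cup Y))-\mathrm{Mag}(tX)-\mathrm{Mag}(tY)$. *)

(* Defs.v *)
From HB Require Import structures.
From mathcomp Require Import all_boot all_order all_algebra.
From mathcomp Require Import finmap.
From mathcomp Require Import all_classical all_reals all_analysis.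
Set Implicit Arguments. Unset Strict Implicit. Unset Printing Implicit Defensive.
Import Order.TTheory GRing.Theory Num.Theory.
Local Open Scope ring_scope.

Definition zeta_mx (R : realType) (t : R) (A : {fset R}) : 'M[R]_(size A) :=
  \matrix_(i < size A, j < size A)
     expR (- (t * `|nth 0 (A : seq R) i - nth 0 (A : seq R) j|)).

(* Mag(tA) = 1^T zeta^{-1} 1 ; the empty sum gives Mag(t emptyset) = 0. *)
Definition Mag (R : realType) (t : R) (A : {fset R}) : R :=
  \sum_(i < size A) \sum_(j < size A) invmx (zeta_mx t A) i j.

Definition dMag (R : realType) (t : R) (X Y : {fset R}) : R :=
  2 * Mag t (fsetU X Y) - Mag t X - Mag t Y.

(* Main.v *)
Require Import Defs.
From HB Require Import structures.
From mathcomp Require Import all_boot all_order all_algebra.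
From mathcomp Require Import finmap.
From mathcomp Require Import all_classical all_reals all_analysis.
From mathcomp Require Import ring lra.
Import Order.TTheory GRing.Theory Num.Theory.
Local Open Scope ring_scope.
Set Implicit Arguments. Unset Strict Implicit. Unset Printing Implicit Defensive.

Section BMax.
Variables (R : realType) (P : pred R) (f : R -> R).
Hypothesis f0 : forall a, 0 <= f a.

Definition bmax (s : seq R) := \big[Order.max/0]_(a <- s | P a) f a.

Lemma bmax_ge0 s : 0 <= bmax s.
Proof.
elim: s => [|a s IH]; rewrite /bmax ?big_nil ?big_cons //.
by case: ifP => _ //; rewrite le_max IH orbT.
Qed.

Lemma bmax_ub s a : a \in s -> P a -> f a <= bmax s.
Proof.
elim: s => //= b s IH; rewrite inE /bmax big_cons => /orP[/eqP->|hs] Pa.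
  by rewrite Pa le_max lexx.
by case: ifP => _; [rewrite le_max (IH hs Pa) orbT | exact: IH].
Qed.

Lemma bmax_le s B : 0 <= B -> (forall a, a \in s -> P a -> f a <= B) -> bmax s <= B.
Proof.
move=> B0; elim: s => [|b s IH] H; rewrite /bmax ?big_nil ?big_cons //.
have IH' : bmax s <= B by apply: IH => a hs; apply: H; rewrite inE hs orbT.
case: ifP => Pb //; rewrite ge_max IH' andbT; apply: H => //; exact: mem_head.
Qed.

Lemma bmax_cases s : (exists2 a, a \in s & P a /\ bmax s = f a) \/
   (bmax s = 0 /\ forall a, a \in s -> ~~ P a).
Proof.
elim: s => [|b s IH]; first by right; split; [rewrite /bmax big_nil|].
have -> : bmax (b :: s) = if P b then Order.max (f b) (bmax s) else bmax s by rewrite /bmax big_cons.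
case: ifP => Pb.
  case: (lerP (f b) (bmax s)) => h.
    case: IH => [[a ha [Pa e]]|[e _]].
      by left; exists a; rewrite ?inE ?ha ?orbT.
    by left; exists b; rewrite ?mem_head //; split => //; apply: le_anti; rewrite h e f0.
  by left; exists b; rewrite ?mem_head.
case: IH => [[a ha [Pa e]]|[e H]].
  by left; exists a; rewrite ?inE ?ha ?orbT.
by right; split => // a; rewrite inE => /orP[/eqP->|]; [rewrite Pb | exact: H].
Qed.

Lemma bmax_sub s1 s2 : {subset s1 <= s2} -> bmax s1 <= bmax s2.
Proof.
move=> sub; apply: bmax_le; first exact: bmax_ge0.
by move=> a ha Pa; apply: bmax_ub => //; exact: sub.
Qed.

Lemma bmax_eq s1 s2 : s1 =i s2 -> bmax s1 = bmax s2.
Proof.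
by move=> e; apply: le_anti; rewrite !bmax_sub // => a; rewrite e.
Qed.
End BMax.

Section Main.
Variables (R : realType) (t : R).
Hypothesis ht : 0 < t.

Definition E (x y : R) : R := expR (- (t * `|x - y|)).

Lemma E_gt0 x y : 0 < E x y. Proof. exact: expR_gt0. Qed.
Lemma E_ge0 x y : 0 <= E x y. Proof. exact/ltW/E_gt0. Qed.
Lemma E_xx x : E x x = 1. Proof. by rewrite /E subrr normr0 mulr0 oppr0 expR0. Qed.
Lemma E_sym x y : E x y = E y x. Proof. by rewrite /E distrC. Qed.
Lemma E_le1 x y : E x y <= 1.
Proof.
rewrite /E -expR0 ler_expR oppr_le0; apply: mulr_ge0; [exact: ltW|exact: normr_ge0].
Qed.
Lemma E_lt1 x y : x != y -> E x y < 1.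
Proof.
move=> h; rewrite /E -expR0 ltr_expR oppr_lt0; apply: mulr_gt0 => //.
by rewrite normr_gt0 subr_eq0.
Qed.
Lemma E_trans {x y z} : x <= y -> y <= z -> E x z = E x y * E y z.
Proof.
move=> h1 h2; rewrite /E -expRD; congr expR.
rewrite !ler0_norm ?subr_le0 //; last exact: le_trans h2.
ring.
Qed.
Lemma E_monoL {a b x} : a <= b -> b <= x -> E a x <= E b x.
Proof.
move=> h1 h2; rewrite (E_trans h1 h2) -[X in _ <= X]mul1r ler_wpM2r ?E_ge0 ?E_le1 //.
Qed.
Lemma E_monoR {x a b} : x <= a -> a <= b -> E x b <= E x a.
Proof.
move=> h1 h2; rewrite (E_trans h1 h2) -[X in _ <= X]mulr1 ler_wpM2l ?E_ge0 ?E_le1 //.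
Qed.

Definition uL (s : seq R) (x : R) := bmax (fun a => a < x) (fun a => E a x) s.
Definition uR (s : seq R) (x : R) := bmax (fun a => x < a) (fun a => E x a) s.
Definition phi (u : R) := (1 - u) / (1 + u).
Definition w (s : seq R) (x : R) := (phi (uL s x) + phi (uR s x)) / 2.

Lemma uL_ge0 s x : 0 <= uL s x. Proof. by apply: bmax_ge0 => *; exact: E_ge0. Qed.
Lemma uR_ge0 s x : 0 <= uR s x. Proof. by apply: bmax_ge0 => *; exact: E_ge0. Qed.
Lemma uL_le1 s x : uL s x <= 1. Proof. by apply: bmax_le => // *; exact: E_le1. Qed.
Lemma uR_le1 s x : uR s x <= 1. Proof. by apply: bmax_le => // *; exact: E_le1. Qed.

Lemma uL_ub s x a : a \in s -> a < x -> E a x <= uL s x.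
Proof. move=> h1 h2; apply: (bmax_ub _ h1) => //; exact: E_ge0. Qed.
Lemma uR_ub s x a : a \in s -> x < a -> E x a <= uR s x.
Proof. move=> h1 h2; apply: (bmax_ub _ h1) => //; exact: E_ge0. Qed.
Lemma uL_sub s1 s2 x : {subset s1 <= s2} -> uL s1 x <= uL s2 x.
Proof. move=> h; apply: bmax_sub => // *; exact: E_ge0. Qed.
Lemma uR_sub s1 s2 x : {subset s1 <= s2} -> uR s1 x <= uR s2 x.
Proof. move=> h; apply: bmax_sub => // *; exact: E_ge0. Qed.
Lemma uL_eq s1 s2 x : s1 =i s2 -> uL s1 x = uL s2 x.
Proof. move=> h; apply: bmax_eq => // *; exact: E_ge0. Qed.
Lemma uR_eq s1 s2 x : s1 =i s2 -> uR s1 x = uR s2 x.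
Proof. move=> h; apply: bmax_eq => // *; exact: E_ge0. Qed.
Lemma uL_le s x B : 0 <= B -> (forall a, a \in s -> a < x -> E a x <= B) -> uL s x <= B.
Proof. by move=> h1 h2; apply: bmax_le. Qed.
Lemma uR_le s x B : 0 <= B -> (forall a, a \in s -> x < a -> E x a <= B) -> uR s x <= B.
Proof. by move=> h1 h2; apply: bmax_le. Qed.

Lemma uL0 s x : (forall a, a \in s -> ~~ (a < x)) -> uL s x = 0.
Proof.
move=> H; apply: le_anti; rewrite uL_ge0 andbT; apply: bmax_le => // a ha hax.
by move: (H a ha); rewrite hax.
Qed.
Lemma uR0 s x : (forall a, a \in s -> ~~ (x < a)) -> uR s x = 0.
Proof.
move=> H; apply: le_anti; rewrite uR_ge0 andbT; apply: bmax_le => // a ha hax.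
by move: (H a ha); rewrite hax.
Qed.
Lemma uL_cons_nlt m s x : ~~ (m < x) -> uL (m :: s) x = uL s x.
Proof. by move=> h; rewrite /uL /bmax big_cons (negbTE h). Qed.
Lemma uR_cons_nlt m s x : ~~ (x < m) -> uR (m :: s) x = uR s x.
Proof. by move=> h; rewrite /uR /bmax big_cons (negbTE h). Qed.
Lemma uL_cons_dom m s x a : a \in s -> m <= a -> a < x -> uL (m :: s) x = uL s x.
Proof.
move=> ha h1 h2; apply: le_anti; apply/andP; split; last first.
  by apply: uL_sub => y hy; rewrite inE hy orbT.
apply: uL_le; first exact: uL_ge0.
move=> y; rewrite inE => /orP[/eqP->|hy] hyx; last exact: uL_ub.
apply: le_trans (E_monoL h1 (ltW h2)) _; exact: uL_ub.
Qed.
Lemma uR_cons_dom m s x a : a \in s -> a <= m -> x < a -> uR (m :: s) x = uR s x.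
Proof.
move=> ha h1 h2; apply: le_anti; apply/andP; split; last first.
  by apply: uR_sub => y hy; rewrite inE hy orbT.
apply: uR_le; first exact: uR_ge0.
move=> y; rewrite inE => /orP[/eqP->|hy] hyx; last exact: uR_ub.
apply: le_trans (E_monoR (ltW h2) h1) _; exact: uR_ub.
Qed.

Lemma phi0 : phi 0 = 1. Proof. by rewrite /phi subr0 addr0 divr1. Qed.

Lemma phi_eq q : 0 <= q -> phi q * (1 + q) = 1 - q.
Proof. move=> q0; rewrite /phi mulrVK // unitfE; apply/negP => /eqP h; lra. Qed.

Lemma sorted_cons m r : sorted (<%R : rel R) (m :: r) -> sorted (<%R : rel R) r /\ (forall y, y \in r -> m < y).
Proof.
move=> Hs; split; first exact: path_sorted Hs.
by move=> y hy; have /allP := order_path_min lt_trans Hs; apply.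
Qed.

Lemma pot s : sorted (<%R : rel R) s -> forall x, x \in s -> \sum_(b <- s) E x b * w s b = 1.
Proof.
elim: s => // m r IH Hs.
have [Hr Hm] := sorted_cons Hs.
case: r IH Hs Hr Hm => [|c r'] IH Hs Hr Hm x.
  rewrite inE => /eqP->; rewrite big_cons big_nil /w E_xx.
  rewrite uL0 ?uR0 ?phi0; first by field.
    by move=> a; rewrite inE => /eqP->; rewrite ltxx.
  by move=> a; rewrite inE => /eqP->; rewrite ltxx.
have [Hr' Hc] := sorted_cons Hr.
have mc : m < c by apply: Hm; exact: mem_head.
have cr' : c \notin r' by apply/negP => /Hc; rewrite ltxx.
set q := E m c.
have q0 : 0 <= q by exact: E_ge0.
have hphi := phi_eq q0.
have wc : w (m :: c :: r') c = w (c :: r') c + (phi q - 1) / 2.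
  rewrite /w uR_cons_nlt; last by rewrite -leNgt ltW.
  have -> : uL (c :: r') c = 0.
    by apply: uL0 => a; rewrite inE => /orP[/eqP->|/Hc h]; rewrite ?ltxx // -leNgt ltW.
  have -> : uL (m :: c :: r') c = q.
    apply: le_anti; rewrite uL_ub ?mem_head ?andbT //.
    apply: uL_le => // a; rewrite !inE => /orP[/eqP->|/orP[/eqP->|/Hc h]] //; rewrite ?ltxx //.
    by rewrite ltNge ltW.
  by rewrite phi0; field.
have wx : forall x, x \in r' -> w (m :: c :: r') x = w (c :: r') x.
  move=> y hy; have cy := Hc _ hy.
  rewrite /w uR_cons_nlt; last by rewrite -leNgt ltW // (lt_trans mc cy).
  by rewrite (@uL_cons_dom m (c :: r') y c) ?mem_head ?ltW.
have wm : w (m :: c :: r') m = (1 + phi q) / 2.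
  rewrite /w uL0; last first.
    by move=> a; rewrite inE => /orP[/eqP->|/Hm h]; rewrite ?ltxx // -leNgt ltW.
  have -> : uR (m :: c :: r') m = q.
    apply: le_anti; rewrite uR_ub ?inE ?eqxx ?orbT ?andbT //.
    apply: uR_le => // a; rewrite !inE => /orP[/eqP->|/orP[/eqP->|/Hc h]] //; rewrite ?ltxx //.
    by move=> _; apply: E_monoR; apply: ltW.
  by rewrite phi0.
have Hsum : forall y, \sum_(b <- r') E y b * w (m :: c :: r') b = \sum_(b <- r') E y b * w (c :: r') b.
  by move=> y; apply: eq_big_seq => b hb; rewrite wx.
rewrite !big_cons wm wc Hsum.
rewrite inE => /orP[/eqP->|hx].
  have IHc := IH Hr c (mem_head _ _); rewrite big_cons E_xx in IHc.
  have -> : \sum_(b <- r') E m b * w (c :: r') b = q * \sum_(b <- r') E c b * w (c :: r') b.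
    rewrite big_distrr /=; apply: eq_big_seq => b hb; rewrite mulrA (E_trans (ltW mc) (ltW (Hc _ hb))) //.
  rewrite E_xx -/q.
  set W := w (c :: r') c; set S := \sum_(b <- r') _.
  change (1 * W + S = 1) in IHc.
  have e : S = 1 - W by lra.
  rewrite e; nra.
have IHx := IH Hr x hx; rewrite big_cons in IHx.
have cx : c <= x by move: hx; rewrite inE => /orP[/eqP->|/Hc/ltW].
have -> : E x m = E x c * q by rewrite E_sym (E_trans (ltW mc) cx) mulrC E_sym.
set W := w (c :: r') c; set S := \sum_(b <- r') _.
change (E x c * W + S = 1) in IHx.
have e : S = 1 - E x c * W by lra.
have h2 : E x c * (phi q * (1 + q)) = E x c * (1 - q) by rewrite hphi.
rewrite e; nra.
Qed.

Lemma inj_sorted s : sorted (<%R : rel R) s -> forall u : R -> R,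
  (forall x, x \in s -> \sum_(b <- s) u b * E x b = 0) -> forall b, b \in s -> u b = 0.
Proof.
elim: s => // m r IH Hs u H.
have [Hr Hm] := sorted_cons Hs.
case: r IH Hs Hr Hm H => [|c r'] IH Hs Hr Hm H b.
  rewrite inE => /eqP->; have := H m (mem_head _ _).
  by rewrite big_cons big_nil E_xx addr0 mulr1.
have [Hr' Hc] := sorted_cons Hr.
have mc : m < c by apply: Hm; exact: mem_head.
have cr' : c \notin r' by apply/negP => /Hc; rewrite ltxx.
set q := E m c.
have q0 : 0 <= q by exact: E_ge0.
have q1 : q < 1 by apply: E_lt1; rewrite neq_lt mc.
pose u' := fun b => if b == c then u c + q * u m else u b.
have neqc : forall b, b \in r' -> (b == c) = false.
  by move=> y hy; apply/negP => /eqP e; move: cr'; rewrite -e hy.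
have H' : forall x, x \in c :: r' -> \sum_(b <- c :: r') u' b * E x b = 0.
  move=> x hx; rewrite big_cons /u' eqxx.
  rewrite (@eq_big_seq _ _ _ _ _ _ (fun b => u b * E x b)); last first.
    by move=> y hy; rewrite neqc.
  have hx' : x \in [:: m, c & r'] by rewrite inE hx orbT.
  have := H x hx'; rewrite !big_cons.
  have cx : c <= x by move: hx; rewrite inE => /orP[/eqP->|/Hc/ltW].
  have -> : E x m = E x c * q by rewrite E_sym (E_trans (ltW mc) cx) mulrC E_sym.
  set S := \sum_(b <- r') _; move=> h.
  have h' : u m * (E x c * q) + (u c * E x c + S) = 0 by [].
  nra.
have Hu' := IH Hr u' H'.
have uc : u c = - q * u m.
  have := Hu' c (mem_head _ _); rewrite /u' eqxx => h; lra.
have ur : forall b, b \in r' -> u b = 0.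
  move=> y hy; have hy' : y \in c :: r' by rewrite inE hy orbT.
  by have := Hu' y hy'; rewrite /u' neqc.
have um : u m = 0.
  have := H m (mem_head _ _); rewrite !big_cons E_xx big1_seq ?addr0; last first.
    by move=> y /andP[_ hy]; rewrite ur // mul0r.
  rewrite uc -/q => h.
  have h2 : u m * (1 - q * q) = 0 by lra.
  move: h2 => /eqP; rewrite mulf_eq0 => /orP[/eqP //|]; rewrite subr_eq0 => /eqP h3.
  nra.
rewrite !inE => /orP[/eqP->//|/orP[/eqP->|hb]]; first by rewrite uc um mulr0.
exact: ur.
Qed.

Lemma sort_lt s : uniq s -> sorted (<%R : rel R) (sort (<=%R : rel R) s).
Proof. by move=> us; rewrite lt_sorted_uniq_le sort_uniq us sort_sorted //; exact: le_total. Qed.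

Lemma perm_sortR s : perm_eq (sort (<=%R : rel R) s) s.
Proof. by rewrite perm_sort perm_refl. Qed.

Lemma w_eq s1 s2 x : s1 =i s2 -> w s1 x = w s2 x.
Proof. by move=> e; rewrite /w (uL_eq _ e) (uR_eq _ e). Qed.

Lemma pot_uniq s x : uniq s -> x \in s -> \sum_(b <- s) E x b * w s b = 1.
Proof.
move=> us hx; have P := perm_sortR s.
rewrite -(perm_big _ P) /=.
rewrite (@eq_bigr _ _ _ _ _ _ _ (fun b => E x b * w (sort (<=%R : rel R) s) b)); last first.
  by move=> b _; rewrite (w_eq _ (perm_mem P)).
by apply: pot; [exact: sort_lt | rewrite (perm_mem P)].
Qed.

Lemma inj_uniq s (u : R -> R) : uniq s ->
  (forall x, x \in s -> \sum_(b <- s) u b * E x b = 0) -> forall b, b \in s -> u b = 0.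
Proof.
move=> us H b hb; have P := perm_sortR s.
apply: (inj_sorted (sort_lt us)); last by rewrite (perm_mem P).
by move=> x hx; rewrite (perm_big _ P) /=; apply: H; rewrite -(perm_mem P).
Qed.

Lemma sum_nth (s : seq R) (F : R -> R) :
  \sum_(b <- s) F b = \sum_(i < size s) F (nth 0 s i).
Proof. by rewrite (big_nth 0) big_mkord. Qed.

Definition Zm (s : seq R) : 'M[R]_(size s) :=
  \matrix_(i < size s, j < size s) E (nth 0 s i) (nth 0 s j).

Lemma Zm_unit s : uniq s -> Zm s \in unitmx.
Proof.
move=> us; rewrite -row_free_unit -kermx_eq0; apply/eqP/row_matrixP => i.
rewrite row0; set v := row i (kermx (Zm s)).
have hv : v *m Zm s = 0 by rewrite -row_mul mulmx_ker row0.
pose u := fun b => \sum_(k < size s | nth 0 s k == b) v 0 k.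
have uE : forall j : 'I_(size s), u (nth 0 s j) = v 0 j.
  move=> j; rewrite /u (big_pred1 j) // => k /=.
  by rewrite nth_uniq.
have H : forall x, x \in s -> \sum_(b <- s) u b * E x b = 0.
  move=> x hx; rewrite sum_nth.
  have hj : (index x s < size s)%N by rewrite index_mem.
  transitivity ((v *m Zm s) 0 (Ordinal hj)); last by rewrite hv mxE.
  rewrite mxE.
  apply: eq_bigr => k _; rewrite uE; congr (_ * _); rewrite /Zm mxE /= nth_index // E_sym //.
apply/rowP => j; rewrite [X in _ = X]mxE -uE; apply: (inj_uniq us H).
exact: mem_nth.
Qed.

Lemma Mag_w (A : {fset R}) : Mag t A = \sum_(b <- A) w A b.
Proof.
set s := (A : seq R); have us : uniq s := fset_uniq A.
have ZE : zeta_mx t A = Zm s by apply/matrixP => i j; rewrite !mxE.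
rewrite /Mag ZE.
pose W := \col_(i < size s) w s (nth 0 s i).
have ZW : Zm s *m W = const_mx 1.
  apply/colP => i; rewrite !mxE -(pot_uniq (x := nth 0 s i) us); last exact: mem_nth.
  by rewrite sum_nth; apply: eq_bigr => j _; rewrite !mxE.
have IW : invmx (Zm s) *m const_mx 1 = W by rewrite -ZW mulKmx // Zm_unit.
rewrite sum_nth; apply: eq_bigr => i _.
move/matrixP: IW => /(_ i 0); rewrite !mxE => <-.
by apply: eq_bigr => j _; rewrite mxE mulr1.
Qed.

Lemma E_ltR x a b : x <= a -> a < b -> E x b < E x a.
Proof.
move=> h1 h2; rewrite (E_trans h1 (ltW h2)) -[X in _ < X]mulr1 ltr_pM2l ?E_gt0 //.
by apply: E_lt1; rewrite neq_lt h2.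
Qed.
Lemma E_ltL a b x : a < b -> b <= x -> E a x < E b x.
Proof.
move=> h1 h2; rewrite (E_trans (ltW h1) h2) -[X in _ < X]mul1r ltr_pM2r ?E_gt0 //.
by apply: E_lt1; rewrite neq_lt h1.
Qed.

Lemma uL_cases s x : (exists2 a, a \in s & a < x /\ uL s x = E a x) \/
   (uL s x = 0 /\ forall a, a \in s -> ~~ (a < x)).
Proof. by apply: bmax_cases => *; exact: E_ge0. Qed.
Lemma uR_cases s x : (exists2 a, a \in s & x < a /\ uR s x = E x a) \/
   (uR s x = 0 /\ forall a, a \in s -> ~~ (x < a)).
Proof. by apply: bmax_cases => *; exact: E_ge0. Qed.

Lemma claimL s b : uniq s -> b \notin s ->
  \sum_(x <- s) (phi (uL (b :: s) x) - phi (uL s x)) = phi (uR s b) - phi (uL s b * uR s b).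
Proof.
move=> us bs.
case: (uR_cases s b) => [[c cs [bc qE]]|[q0 H]]; last first.
  rewrite q0 mulr0 subrr big1_seq // => x /andP[_ hx].
  by rewrite uL_cons_nlt ?subrr // H.
set p := uL s b; set q := uR s b.
have succ : forall y, y \in s -> b < y -> c <= y.
  move=> y ys hy; rewrite leNgt; apply/negP => yc.
  have := E_ltR (ltW hy) yc; rewrite -qE ltNge.
  by move/negP; apply; apply: uR_ub.
have pred : forall a, a \in s -> a < c -> a < b.
  move=> a ha ac; rewrite ltNge le_eqVlt; apply/negP => /orP[/eqP e|ba].
    by move: bs; rewrite e ha.
  by move: (succ a ha ba); rewrite leNgt ac.
have p0 : 0 <= p := uL_ge0 s b.
have q0 : 0 <= q := uR_ge0 s b.
have q1 : q <= 1 := uR_le1 s b.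
have Lc : uL s c = p * q.
  apply: le_anti; apply/andP; split.
    apply: uL_le; first exact: mulr_ge0.
    move=> a ha ac; have ab := pred a ha ac.
    rewrite (E_trans (ltW ab) (ltW bc)) -qE ler_wpM2r //.
    exact: uL_ub.
  case: (uL_cases s b) => [[a ha [ab pE]]|[e _]]; last by rewrite /p e mul0r uL_ge0.
  rewrite /p /q pE qE -(E_trans (ltW ab) (ltW bc)); apply: uL_ub => //; exact: lt_trans bc.
have Lc' : uL (b :: s) c = q.
  apply: le_anti; apply/andP; split; last by rewrite /q qE; apply: uL_ub => //; exact: mem_head.
  apply: uL_le => // a; rewrite inE => /orP[/eqP->|ha] ac; first by rewrite /q qE.
  have ab := pred a ha ac.
  rewrite (E_trans (ltW ab) (ltW bc)) -qE -[X in _ <= X]mul1r ler_wpM2r //.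
  exact: E_le1.
rewrite (bigD1_seq c) //= Lc Lc' big1_seq ?addr0 // => x /andP[xc xs].
case: (ltP b x) => bx; last by rewrite uL_cons_nlt ?subrr // -leNgt.
have cx : c < x by rewrite lt_neqAle eq_sym xc succ.
by rewrite (@uL_cons_dom b s x c) ?subrr // ltW.
Qed.

Lemma uR_neg s x : uR s x = uL (map -%R s) (-x).
Proof.
rewrite /uR /uL /bmax big_map; apply: eq_big => [a|a _]; first by rewrite /= ltrN2.
by rewrite /E -opprD normrN distrC.
Qed.
Lemma uL_neg s x : uL s x = uR (map -%R s) (-x).
Proof.
rewrite /uR /uL /bmax big_map; apply: eq_big => [a|a _]; first by rewrite /= ltrN2.
by rewrite /E -opprD normrN distrC.
Qed.

Lemma claimR s b : uniq s -> b \notin s ->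
  \sum_(x <- s) (phi (uR (b :: s) x) - phi (uR s x)) = phi (uL s b) - phi (uL s b * uR s b).
Proof.
move=> us bs.
rewrite (eq_bigr (fun x => phi (uL (map -%R (b :: s)) (-x)) - phi (uL (map -%R s) (-x)))); last first.
  by move=> x _; rewrite !uR_neg.
rewrite -(big_map -%R xpredT (fun y => phi (uL (map -%R (b :: s)) y) - phi (uL (map -%R s) y))) /=.
rewrite claimL; first by rewrite (uL_neg s b) (uR_neg s b) mulrC.
  by rewrite map_inj_uniq //; exact: oppr_inj.
by rewrite mem_map //; exact: oppr_inj.
Qed.

Definition F (s : seq R) := \sum_(b <- s) w s b.
Definition D (p q : R) := phi p + phi q - phi (p * q).

Lemma F_cons s b : uniq s -> b \notin s -> F (b :: s) = F s + D (uL s b) (uR s b).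
Proof.
move=> us bs; rewrite /F big_cons.
have wb : w (b :: s) b = (phi (uL s b) + phi (uR s b)) / 2.
  by rewrite /w uL_cons_nlt ?ltxx // uR_cons_nlt ?ltxx.
have eL : \sum_(x <- s) (phi (uL (b :: s) x) - phi (uL s x)) / 2 =
    (phi (uR s b) - phi (uL s b * uR s b)) / 2 by rewrite -mulr_suml claimL.
have eR : \sum_(x <- s) (phi (uR (b :: s) x) - phi (uR s x)) / 2 =
    (phi (uL s b) - phi (uL s b * uR s b)) / 2 by rewrite -mulr_suml claimR.
have -> : \sum_(x <- s) w (b :: s) x = \sum_(x <- s) (w s x +
   (phi (uL (b :: s) x) - phi (uL s x)) / 2 + (phi (uR (b :: s) x) - phi (uR s x)) / 2).
  by apply: eq_bigr => x _; rewrite /w; field.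
rewrite big_split /= big_split /= eL eR wb /D.
by field.
Qed.

Lemma F_perm s1 s2 : perm_eq s1 s2 -> F s1 = F s2.
Proof.
move=> P; rewrite /F (perm_big _ P) /=; apply: eq_bigr => b _.
exact: w_eq (perm_mem P).
Qed.

Lemma D_anti p p' q : 0 <= p -> p <= p' -> p' <= 1 -> 0 <= q -> q <= 1 -> D p' q <= D p q.
Proof.
move=> h1 h2 h3 h4 h5; rewrite -subr_ge0.
have n1 : 1 + p != 0 by rewrite gt_eqF //; lra.
have n2 : 1 + p' != 0 by rewrite gt_eqF //; lra.
have n3 : 1 + p * q != 0 by rewrite gt_eqF //; nra.
have n4 : 1 + p' * q != 0 by rewrite gt_eqF //; nra.
have n5 : 1 + q != 0 by rewrite gt_eqF //; lra.
have -> : D p q - D p' q = 2 * (p' - p) * (1 - q) * (1 - p * p' * q) /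
   ((1 + p) * (1 + p') * (1 + p * q) * (1 + p' * q)).
  by rewrite /D /phi; field; rewrite n1 n2 n3 n4 n5.
apply: divr_ge0.
  apply: mulr_ge0; last by nra.
  apply: mulr_ge0; lra.
apply: mulr_ge0; last by nra.
apply: mulr_ge0; last by nra.
apply: mulr_ge0; lra.
Qed.

Lemma D_sym p q : D p q = D q p.
Proof. by rewrite /D mulrC (addrC (phi p)). Qed.

Lemma D_ge0 p q : 0 <= p -> p <= 1 -> 0 <= q -> q <= 1 -> 0 <= D p q.
Proof.
move=> h1 h2 h3 h4; have := D_anti h1 h2 (lexx 1) h3 h4.
by rewrite /D mul1r /phi subrr mul0r add0r subrr.
Qed.


Definition FA (A : {fset R}) := F A.

Lemma FA_U1 (A : {fset R}) b : b \notin A -> FA (b |` A)%fset = FA A + D (uL A b) (uR A b).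
Proof.
move=> bA; rewrite /FA -F_cons ?fset_uniq //; apply: F_perm; apply: uniq_perm.
- exact: fset_uniq.
- by rewrite /= bA fset_uniq.
by move=> x; rewrite !inE.
Qed.

Lemma U1_in (A : {fset R}) b : b \in A -> (b |` A)%fset = A.
Proof. by move=> bA; apply/fsetP => x; rewrite !inE; case: eqP => // ->. Qed.

Lemma FA_step_ge (A : {fset R}) b : FA A <= FA (b |` A)%fset.
Proof.
case: (boolP (b \in A)) => bA; first by rewrite U1_in.
rewrite FA_U1 // lerDl; apply: D_ge0; [exact: uL_ge0|exact: uL_le1|exact: uR_ge0|exact: uR_le1].
Qed.

Lemma FA_step_sub (A B : {fset R}) b : {subset A <= B} ->
  FA (b |` B)%fset - FA B <= FA (b |` A)%fset - FA A.
Proof.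
move=> AB; case: (boolP (b \in B)) => bB.
  by rewrite U1_in // subrr subr_ge0 FA_step_ge.
have bA : b \notin A by apply/negP => /AB; rewrite (negbTE bB).
rewrite !FA_U1 //.
suff : D (uL B b) (uR B b) <= D (uL A b) (uR A b) by lra.
apply: le_trans (D_anti (uL_ge0 A b) (uL_sub _ AB) (uL_le1 B b) (uR_ge0 B b) (uR_le1 B b)) _.
rewrite D_sym [X in _ <= X]D_sym.
exact: (D_anti (uR_ge0 A b) (uR_sub _ AB) (uR_le1 B b) (uL_ge0 A b) (uL_le1 A b)).
Qed.

Definition ext (A : {fset R}) (l : seq R) := foldr (fun x S => (x |` S)%fset) A l.

Lemma ext_mem A l x : (x \in ext A l) = (x \in A) || (x \in l).
Proof.
elim: l => [|y l IH] /=; first by rewrite orbF.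
by rewrite !inE IH; case: (x == y); rewrite ?orbT.
Qed.

Lemma ext_ge A l : FA A <= FA (ext A l).
Proof. by elim: l => //= y l IH; apply: le_trans IH (FA_step_ge _ _). Qed.

Lemma ext_sub A B l : {subset A <= B} -> FA (ext B l) - FA B <= FA (ext A l) - FA A.
Proof.
move=> AB; elim: l => [|y l IH] /=; first by rewrite !subrr.
have AB' : {subset ext A l <= ext B l}.
  by move=> x; rewrite !ext_mem => /orP[/AB->|->]; rewrite ?orbT.
have := FA_step_sub y AB'; lra.
Qed.

Lemma ext_U A (C : {fset R}) : ext A C = (A `|` C)%fset.
Proof. by apply/fsetP => x; rewrite ext_mem inE. Qed.

Lemma FA_submod (X Y Z : {fset R}) :
  FA (X `|` Z)%fset + FA Y <= FA (X `|` Y)%fset + FA (Y `|` Z)%fset.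
Proof.
have h1 := ext_ge (X `|` Z)%fset Y; rewrite ext_U in h1.
have AB : {subset Y <= (X `|` Y)%fset} by move=> x; rewrite inE => ->; rewrite orbT.
have h2 := ext_sub Z AB; rewrite !ext_U in h2.
have e : (X `|` Z `|` Y)%fset = (X `|` Y `|` Z)%fset.
  by apply/fsetP => x; rewrite !inE; case: (x \in X); case: (x \in Y); case: (x \in Z).
rewrite e in h1; lra.
Qed.

End Main.

Unset Implicit Arguments.
Theorem propositionB7 (R : realType) (t : R) (X Y Z : {fset R}) :
  0 < t -> dMag t X Y + dMag t Y Z >= dMag t X Z.
Proof.
move=> ht; rewrite /dMag !(Mag_w ht).
have := FA_submod ht X Y Z; rewrite /FA /F.
lra.
Qed.
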